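(* For all $m,n\ge 3$, the state complexity of $(U_n(d,c,b,a))^R\,(U_m(a,b,c,d))^R$ (which equals $(U_m(a,b,c,d)\,U_n(d,c,b,a))^R$) is $3\cdot 2^{m+n-2}-2^n+1$.
   Context: The state complexity of a regular language is the number of states of its minimal complete DFA. For $n\ge 3$, $\mathcal{U}_n(a,b,c,d)$ is the DFA over $\{a,b,c,d\}$ with states $\{0,\dots,n-1\}$, initial state $0$, final states $\{n-1\}$, where $a$ maps $i\mapsto i+1\pmod n$; $b$ swaps $0$ and $1$ fixing other states; $c$ maps $n-1$ to $0$ fixing other states; $d$ is the identity. $U_n(a,b,c,d)$ is its language. $U_n(d,c,b,a)$ is the language of the DFA with the same states, initial state $0$ and final states $\{n-1\}$, in which $d$ maps $i\mapsto i+1\pmod n$, $c$ swaps $0$ and $1$, $b$ maps $n-1$ to $0$ fixing others, and $a$ is the identity. $L^R$ is the reversal of $L$, and $KL$ is concatenation. *)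

(* Defs.v *)
From mathcomp Require Import all_boot.
Set Implicit Arguments. Unset Strict Implicit. Unset Printing Implicit Defensive.

Definition Sigma : finType := 'I_4.
Definition la : Sigma := @Ordinal 4 0 isT.
Definition lb : Sigma := @Ordinal 4 1 isT.
Definition lc : Sigma := @Ordinal 4 2 isT.
Definition ld : Sigma := @Ordinal 4 3 isT.

Definition word := seq Sigma.
Definition lang := word -> Prop.

Record dfa := DFA {
  dstate : finType;
  dinit : dstate;
  dfinal : pred dstate;
  ddelta : dstate -> Sigma -> dstate }.

Definition accepts (A : dfa) (w : word) : bool :=
  @dfinal A (foldl (@ddelta A) (@dinit A) w).

Definition recognizes (A : dfa) (L : lang) : Prop :=
  forall w, L w <-> accepts A w.

Definition state_complexity (L : lang) (k : nat) : Prop :=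
  (exists A : dfa, recognizes A L /\ #|dstate A| = k) /\
  (forall A : dfa, recognizes A L -> k <= #|dstate A|).

Definition rev_lang (L : lang) : lang := fun w => L (rev w).
Definition cat_lang (K L : lang) : lang :=
  fun w => exists u v, w = u ++ v /\ K u /\ L v.

(* U_n(x1,x2,x3,x4): states {0,...,n-1} (as 'I_(n.-1.+1), which is 'I_n for
   n >= 1), initial 0, final {n-1}; x1 : i |-> i+1 mod n; x2 swaps 0 and 1;
   x3 maps n-1 to 0; x4 (and anything else) is the identity. *)
Definition U_delta (n : nat) (x1 x2 x3 : Sigma) (i : 'I_(n.-1.+1)) (s : Sigma)
  : 'I_(n.-1.+1) :=
  if s == x1 then inord ((i.+1) %% n)
  else if s == x2 then
    (if i == 0 :> nat then inord 1 else if i == 1 :> nat then inord 0 else i)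
  else if s == x3 then
    (if i == n.-1 :> nat then ord0 else i)
  else i.

Definition U_dfa (n : nat) (x1 x2 x3 x4 : Sigma) : dfa :=
  @DFA _ (ord0 : 'I_(n.-1.+1)) (fun i => i == ord_max) (@U_delta n x1 x2 x3).

Definition U_lang (n : nat) (x1 x2 x3 x4 : Sigma) : lang :=
  fun w => accepts (U_dfa n x1 x2 x3 x4) w.

(* Main.v *)
Require Import Defs.
From mathcomp Require Import all_boot zify.
Set Implicit Arguments. Unset Strict Implicit. Unset Printing Implicit Defensive.


Lemma card_setsT (T : finType) : #|{: {set T}}| = 2 ^ #|T|.
Proof. by rewrite -[in RHS]cardsT -card_powerset powersetT cardsT. Qed.

Lemma card_notin (T : finType) (x : T) : #|[set X : {set T} | x \notin X]| = 2 ^ #|T|.-1.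
Proof.
have -> : [set X : {set T} | x \notin X] = powerset [set~ x].
  apply/setP=> X; rewrite !inE; apply/idP/idP.
    by move=> hx; apply/subsetP=> y hy; rewrite !inE; apply: contra hx => /eqP <-.
  by move/subsetP=> h; apply/negP=> /h; rewrite !inE eqxx.
by rewrite card_powerset cardsC1.
Qed.

Lemma card_in (T : finType) (x : T) : #|[set X : {set T} | x \in X]| = 2 ^ #|T| - 2 ^ #|T|.-1.
Proof.
rewrite -card_setsT -(card_notin x) -(cardsC [set X : {set T} | x \notin X]).
rewrite addKn; apply: eq_card => X; by rewrite !inE negbK.
Qed.

Section Main.
Variables n0 m0 : nat.
Local Notation N := n0.+3.
Local Notation M := m0.+3.
Local Notation IK := 'I_N.
Local Notation IL := 'I_M.

Definition dK (i : IK) (s : Sigma) : IK := @U_delta N ld lc lb i s.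
Definition dL (j : IL) (s : Sigma) : IL := @U_delta M la lb lc j s.

Definition St := ({set IK} * {set IL})%type.
Definition step (p : St) (t : Sigma) : St :=
  ([set i | dK i t \in p.1],
   [set j | (dL j t \in p.2) || ((dK ord0 t \in p.1) && (j == ord_max))]).
Definition init : St := ([set ord_max], set0).
Definition phi (w : word) : St := foldl step init w.

Lemma phi_rcons w t : phi (rcons w t) = step (phi w) t.
Proof. by rewrite /phi foldl_rcons. Qed.

Lemma phi_cat w z : phi (w ++ z) = foldl step (phi w) z.
Proof. by rewrite /phi foldl_cat. Qed.

Lemma phi_sem w :
  (forall i, (i \in (phi w).1) = (foldl dK i (rev w) == ord_max)) /\
  (forall j, (j \in (phi w).2) <->
     exists u v, w = u ++ v /\ foldl dK ord0 (rev u) == ord_max /\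
                 foldl dL j (rev v) == ord_max).
Proof.
elim/last_ind: w => [|w t [IH1 IH2]].
  split=> [i|j]; first by rewrite /phi /= inE.
  rewrite /phi /= inE; split=> // [[u [v [/esym/nilP]]]].
  rewrite cat_nilp => /andP[/nilP -> _] /= [] //.
rewrite phi_rcons /step /= rev_rcons /=; split=> [i|j].
  by rewrite inE IH1.
rewrite inE; split.
  case/orP=> [/IH2 [u [v [-> [hu hv]]]]|/andP[h /eqP ->]].
    exists u, (rcons v t); split; first by rewrite rcons_cat.
    by rewrite rev_rcons /=.
  exists (rcons w t), [::]; split; first by rewrite cats0.
  by rewrite rev_rcons /= -IH1.
case=> u [v [e [hu hv]]].
case/lastP: v e hv => [|v t'].
  rewrite cats0 => eu /= hj; subst u; apply/orP; right.
  by rewrite hj andbT IH1; rewrite rev_rcons /= in hu.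
rewrite -rcons_cat => /rcons_inj [ew et] hv; subst t'.
apply/orP; left; apply/IH2; exists u, v; split=> //; split=> //.
by rewrite rev_rcons /= in hv.
Qed.

Definition Lang := cat_lang (rev_lang (U_lang N ld lc lb la)) (rev_lang (U_lang M la lb lc ld)).

Lemma Lang_phi w : Lang w <-> ord0 \in (phi w).2.
Proof.
have [_ H] := phi_sem w.
rewrite H /Lang /cat_lang /rev_lang /U_lang /accepts /=.
by [].
Qed.


Lemma dK_a i : dK i la = i. Proof. by []. Qed.
Lemma dK_d i : dK i ld = inord (i.+1 %% N). Proof. by []. Qed.
Lemma dK_c i : dK i lc = if val i == 0 then inord 1 else if val i == 1 then inord 0 else i. Proof. by []. Qed.
Lemma dK_b i : dK i lb = if val i == N.-1 then ord0 else i. Proof. by []. Qed.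
Lemma dL_a j : dL j la = inord (j.+1 %% M). Proof. by []. Qed.
Lemma dL_b j : dL j lb = if val j == 0 then inord 1 else if val j == 1 then inord 0 else j. Proof. by []. Qed.
Lemma dL_c j : dL j lc = if val j == M.-1 then ord0 else j. Proof. by []. Qed.
Lemma dL_d j : dL j ld = j. Proof. by []. Qed.

Definition setK (P : nat -> bool) : {set IK} := [set i : IK | P (val i)].
Definition setL (P : nat -> bool) : {set IL} := [set i : IL | P (val i)].

Lemma inordK_K k : k < N -> val (inord k : IK) = k.
Proof. exact: inordK. Qed.
Lemma inordK_L k : k < M -> val (inord k : IL) = k.
Proof. exact: inordK. Qed.

Lemma eq_setK P Q : (forall k, k < N -> P k = Q k) -> setK P = setK Q.
Proof. by move=> H; apply/setP=> i; rewrite !inE H ?ltn_ord. Qed.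
Lemma eq_setL P Q : (forall k, k < M -> P k = Q k) -> setL P = setL Q.
Proof. by move=> H; apply/setP=> i; rewrite !inE H ?ltn_ord. Qed.

Lemma setK_id (X : {set IK}) : X = setK (fun k => inord k \in X).
Proof. by apply/setP=> i; rewrite inE inord_val. Qed.
Lemma setL_id (Y : {set IL}) : Y = setL (fun k => inord k \in Y).
Proof. by apply/setP=> i; rewrite inE inord_val. Qed.

Lemma modN_lt k : k %% N < N. Proof. by rewrite ltn_pmod. Qed.
Lemma modM_lt k : k %% M < M. Proof. by rewrite ltn_pmod. Qed.

Lemma stepK_d P : [set i | dK i ld \in setK P] = setK (fun k => P (k.+1 %% N)).
Proof. by apply/setP=> i; rewrite !inE dK_d inordK_K // modN_lt. Qed.
Lemma stepK_c P : [set i | dK i lc \in setK P] =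
   setK (fun k => P (if k == 0 then 1 else if k == 1 then 0 else k)).
Proof.
apply/setP=> i; rewrite !inE dK_c.
by case: ifP => _; [|case: ifP => _]; rewrite ?inordK_K.
Qed.
Lemma stepK_b P : [set i | dK i lb \in setK P] =
   setK (fun k => P (if k == N.-1 then 0 else k)).
Proof. by apply/setP=> i; rewrite !inE dK_b; case: ifP. Qed.
Lemma stepL_a P : [set j | dL j la \in setL P] = setL (fun k => P (k.+1 %% M)).
Proof. by apply/setP=> i; rewrite !inE dL_a inordK_L // modM_lt. Qed.
Lemma stepL_b P : [set j | dL j lb \in setL P] =
   setL (fun k => P (if k == 0 then 1 else if k == 1 then 0 else k)).
Proof.
apply/setP=> i; rewrite !inE dL_b.
by case: ifP => _; [|case: ifP => _]; rewrite ?inordK_L.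
Qed.
Lemma stepL_c P : [set j | dL j lc \in setL P] =
   setL (fun k => P (if k == M.-1 then 0 else k)).
Proof. by apply/setP=> i; rewrite !inE dL_c; case: ifP. Qed.

Definition rotK k (X : {set IK}) : {set IK} := [set i : IK | inord ((i + k) %% N) \in X].

Lemma rotK_add a b X : rotK a (rotK b X) = rotK (a + b) X.
Proof.
apply/setP=> i; rewrite !inE inordK_K ?modN_lt //.
by rewrite modnDml addnA.
Qed.
Lemma rotK0 X : rotK 0 X = X.
Proof. apply/setP=> i; rewrite !inE addn0 modn_small //; by rewrite inord_val. Qed.
Lemma rotKN X : rotK N X = X.
Proof. apply/setP=> i; rewrite !inE modnDr modn_small //; by rewrite inord_val. Qed.

Lemma Dpow k (X : {set IK}) (Y : {set IL}) :
  (foldl step (X, Y) (nseq k ld)).1 = rotK k X /\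
  forall j, j \in (foldl step (X, Y) (nseq k ld)).2 <->
     j \in Y \/ (j == ord_max /\ exists2 s, s < k & inord (s.+1 %% N) \in X).
Proof.
elim: k => [|k [IH1 IH2]].
  split=> [|j]; first by rewrite rotK0.
  split; first by left. by case=> // [[_ [s]]].
rewrite -[k.+1]addn1 nseqD foldl_cat /= IH1; split.
  rewrite addnC -rotK_add; apply/setP=> i; rewrite !inE dK_d.
  by rewrite addn1.
have hd : (dK ord0 ld \in rotK k X) = (inord (k.+1 %% N) \in X).
  by rewrite inE dK_d inordK_K ?modN_lt // modnDml add1n.
move=> j; rewrite inE dL_d hd; split.
  case/orP=> [/IH2 [h|[h1 [s h2 h3]]]|/andP[h /eqP ->]]; first by left.
    by right; split=> //; exists s => //; lia.
  by right; split=> //; exists k => //; lia.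
case=> [h|[/eqP -> [s hs hX]]].
  by apply/orP; left; apply/IH2; left.
have [hsk|hsk] := ltnP s k.
  by apply/orP; left; apply/IH2; right; split=> //; exists s.
have esk : s = k by lia.
by subst s; apply/orP; right; rewrite eqxx andbT.
Qed.

Definition Ak k (X : {set IK}) (Y : {set IL}) : {set IL} :=
  [set j : IL | (inord ((j + k) %% M) \in Y) || ((ord0 \in X) && (M - k <= j))].

Lemma Apow k (X : {set IK}) (Y : {set IL}) : k < M ->
  foldl step (X, Y) (nseq k la) = (X, Ak k X Y).
Proof.
elim: k => [|k IH] hk.
  congr pair; apply/setP=> j; rewrite inE addn0 modn_small // inord_val.
  have := ltn_ord j; rewrite subn0 => hj; rewrite leqNgt hj andbF orbF //.
rewrite -[k.+1]addn1 nseqD foldl_cat IH; last by lia.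
rewrite /= /step /=; congr pair.
  by apply/setP=> i; rewrite inE dK_a.
apply/setP=> j; rewrite !inE dL_a dK_a inordK_L ?modM_lt // modnDml.
have -> : (j + (k + 1)) = j.+1 + k by lia.
have hj := ltn_ord j.
have [e|ne] := eqVneq (j : nat) M.-1.
  have -> : j == ord_max by apply/eqP/val_inj.
  rewrite e -[M.-1.+1]/M modnn /=.
  have -> : (M - k <= 0) = false by apply/negbTE; lia.
  have -> : (M - (k + 1) <= m0.+2) = true by apply/idP; lia.
  by case: (_ \in Y); case: (ord0 \in X).
have -> : (j == ord_max) = false by apply/negbTE; apply: contra ne => /eqP ->.
rewrite [j.+1 %% M]modn_small; last by lia.
have -> : (M - k <= j.+1) = (M - (k + 1) <= j) by apply/idP/idP; lia.
by rewrite andbF orbF.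
Qed.

Lemma Apow0 k (X : {set IK}) (Y : {set IL}) : k < M ->
  (ord0 \in (foldl step (X, Y) (nseq k la)).2) = (inord k \in Y).
Proof.
move=> hk; rewrite Apow //= inE /= add0n modn_small //.
by case: (_ \in Y) => //=; apply/negbTE; rewrite negb_and; apply/orP; right; lia.
Qed.

Lemma step_full p t : p.2 = setT -> (step p t).2 = setT.
Proof. by move=> h; apply/setP=> j; rewrite !inE h inE. Qed.

Lemma fold_full p z : p.2 = setT -> (foldl step p z).2 = setT.
Proof. by elim: z p => //= t z IH p h; apply: IH; apply: step_full. Qed.

Lemma keyX (X : {set IK}) (Y : {set IL}) (y : IL) (i : IK) : y \notin Y ->
  (ord0 \in (foldl step (X, Y) (nseq y la ++ nseq (i + N.-1) ld ++ lc :: nseq M.-1 la)).2)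
  = (i \in X).
Proof.
move=> hy; rewrite !foldl_cat Apow //.
have h0 : ord0 \notin Ak y X Y.
  by have := Apow0 X Y (ltn_ord y); rewrite Apow // inord_val => ->.
have [D1 D2] := Dpow (i + N.-1) X (Ak y X Y).
move: D1 D2; case: (foldl step _ _) => X2 Y2 D1 D2; rewrite /= in D1 D2.
have -> : foldl step (X2,Y2) (lc :: nseq M.-1 la) =
   foldl step ((step (X2,Y2) lc).1, (step (X2,Y2) lc).2) (nseq M.-1 la) by [].
rewrite Apow0 // /step /= inE.
have -> : (inord M.-1 : IL) = ord_max by apply/val_inj; rewrite inordK_L.
have -> : dL ord_max lc = ord0 by rewrite dL_c /= eqxx.
have -> : (ord0 \in Y2) = false.
  apply/negbTE/negP=> /D2 [|[]] //; by rewrite (negbTE h0).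
rewrite eqxx andbT D1 /= dK_c /= inE inordK_K //.
have -> : (1 + (i + n0.+2)) = i + N by lia.
by rewrite modnDr modn_small // inord_val.
Qed.

Lemma dist (p q : St) : p.2 != setT -> q.2 != setT -> p != q ->
  exists z, (ord0 \in (foldl step p z).2) != (ord0 \in (foldl step q z).2).
Proof.
case: p => X Y; case: q => X' Y' /= hY hY' hpq.
case: (pickP (fun j => (j \in Y) != (j \in Y'))) => [j hj|hall].
  exists (nseq j la); rewrite !Apow0 // inord_val; exact: hj.
have eY : Y = Y'.
  by apply/setP=> j; have := hall j; rewrite /= => /negbFE/eqP.
subst Y'.
case: (pickP (fun i => (i \in X) != (i \in X'))) => [i hi|hall'].
  case: (pickP (fun y => y \notin Y)) => [y hy|hnone]; last first.
    by case/negP: hY; apply/eqP/setP=> j; rewrite inE; have := hnone j => /= /negbFE.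
  by exists (nseq y la ++ nseq (i + N.-1) ld ++ lc :: nseq M.-1 la); rewrite !keyX.
case/negP: hpq; apply/eqP; congr pair.
by apply/setP=> i; have := hall' i; rewrite /= => /negbFE/eqP.
Qed.

Lemma dist_full (p q : St) : p.2 != setT -> q.2 = setT ->
  exists z, (ord0 \in (foldl step p z).2) != (ord0 \in (foldl step q z).2).
Proof.
case: p => X Y /= hY hq.
case: (pickP (fun y => y \notin Y)) => [y hy|hnone]; last first.
  by case/negP: hY; apply/eqP/setP=> j; rewrite inE; have := hnone j => /= /negbFE.
exists (nseq y la); rewrite Apow0 // inord_val fold_full // inE.
by rewrite (negbTE hy).
Qed.

Definition reach (p : St) := exists w, phi w = p.
Lemma reach_fold p z : reach p -> reach (foldl step p z).
Proof. by case=> w <-; exists (w ++ z); rewrite phi_cat. Qed.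
Lemma reach_init : reach init.
Proof. by exists [::]. Qed.

Definition small (Y : {set IL}) := forall j, j \in Y -> j = ord_max.

Lemma stepK_cd P :
  [set i | dK i ld \in [set i | dK i lc \in setK P]] =
  setK (fun k => if k == 0 then P 0 else if k == N.-1 then P 1 else P k.+1).
Proof.
rewrite stepK_c stepK_d; apply: eq_setK => k hk.
have [->|k0] := eqVneq k 0; first by rewrite modn_small.
have [->|k1] := eqVneq k N.-1; first by rewrite modnn.
rewrite modn_small; last by lia.
by have -> : (k.+1 == 0) = false by []; have -> : (k.+1 == 1) = false by apply/negbTE; lia.
Qed.

Fixpoint W1 (S : nat -> bool) t : word :=
  if t is t'.+1 then W1 S t' ++ [:: lc; ld] ++ (if S t then [:: lb] else [::]) else [::].

Definition XW (S : nat -> bool) t :=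
  setK (fun k => (k == 0) || ((N - t <= k) && S (k + t + 1 - N))).

Lemma small_step (X : {set IK}) (Y : {set IL}) t : t != la -> small Y -> small (step (X, Y) t).2.
Proof.
move=> ht hY j; rewrite inE /= => /orP[h|/andP[_ /eqP //]].
move: h; have hj := ltn_ord j.
have [->|tld] := eqVneq t ld; first by rewrite dL_d => /hY.
have [->|tlb] := eqVneq t lb.
  rewrite dL_b; case: ifP => [/eqP e|_]; first by move/hY/(congr1 val); rewrite inordK_L.
  case: ifP => [/eqP e|_]; first by move/hY/(congr1 val); rewrite inordK_L.
  by move/hY.
have [->|tlc] := eqVneq t lc.
  rewrite dL_c; case: ifP => [/eqP e|/negbT e]; first by move/hY/(congr1 val).
  move/hY=> ej; case/negP: e; by rewrite ej.
by move: ht tld tlb tlc; case: t => [[|[|[|[|k]]]] hk].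
Qed.

Lemma small_step' (p : St) t : t != la -> small p.2 -> small (step p t).2.
Proof. by case: p => X Y; apply: small_step. Qed.

Lemma phase1w S t (Y : {set IL}) : t < N -> small Y ->
  (foldl step (setK (fun k => k == 0), Y) (W1 S t)).1 = XW S t /\ small (foldl step (setK (fun k => k == 0), Y) (W1 S t)).2.
Proof.
move=> + hY; elim: t => [|t IH] ht.
  split=> //=; apply: eq_setK => k hk; rewrite subn0; case: (k == 0) => //=.
  by rewrite leqNgt hk.
have [IH1 IH2] := IH (ltnW ht).
rewrite /= foldl_cat; move: IH1 IH2; case: (foldl _ _ _) => X1 Y1 /= -> hY1.
have hs2 : small (step (step (XW S t, Y1) lc) ld).2.
  have h1 := @small_step (XW S t) Y1 lc isT hY1.
  by case: (step (XW S t, Y1) lc) h1 => X2 Y2 /= h1; apply: small_step.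
have eX : [set i | dK i ld \in [set i0 | dK i0 lc \in XW S t]] = setK (fun k => if k == 0 then true
     else if k == N.-1 then false else (N - t.+1 <= k) && S (k + t.+1 + 1 - N)).
  rewrite stepK_cd; apply: eq_setK => k hk.
  have [_|k0] := eqVneq k 0; first by [].
  have [ek|k1] := eqVneq k n0.+2.
    by rewrite /= andbC; case: (S _) => //=; apply/negbTE; lia.
  have -> : (k.+1 == 0) = false by [].
  have -> : N - t <= k.+1 = (N - t.+1 <= k) by apply/idP/idP; lia.
  by have -> : k.+1 + t + 1 - N = k + t.+1 + 1 - N by lia.
case hS: (S t.+1) => /=.
  split; last exact (small_step' (isT : lb != la) hs2).
  rewrite eX stepK_b; apply: eq_setK => k hk.
  have [ek|k1] := eqVneq k n0.+2.
    subst k; have -> : n0.+2 + t.+1 + 1 - N = t.+1 by lia.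
    by rewrite hS andbT /=; apply/esym/idP; lia.
  have [_|k0] := eqVneq k 0; first by [].
  by rewrite (negbTE k1).
split; last exact: hs2.
rewrite eX; apply: eq_setK => k hk.
have [_|k0] := eqVneq k 0; first by [].
have [ek|k1] := eqVneq k n0.+2; last by [].
subst k; have -> : n0.+2 + t.+1 + 1 - N = t.+1 by lia.
by rewrite hS andbF.
Qed.

Lemma Dpow_small k (X : {set IK}) (Y : {set IL}) : small Y ->
  small (foldl step (X, Y) (nseq k ld)).2.
Proof.
move=> hY j /(Dpow k X Y).2 [/hY //|[/eqP -> _] //].
Qed.

Lemma reachZ (Z : {set IK}) : ord0 \in Z -> exists Y, small Y /\ reach (Z, Y).
Proof.
move=> hZ.
pose p1 := foldl step init (nseq N.-1 ld).
have [D1 _] := Dpow N.-1 [set ord_max] set0.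
have hp1 : p1.1 = setK (fun k => k == 0).
  rewrite /p1 /init D1; apply/setP=> i; rewrite !inE.
  apply/eqP/eqP => [/(congr1 val)|i0]; rewrite /= ?inordK ?modN_lt //=.
    have hi := ltn_ord i.
    case: (posnP i) => // ip; have -> : i + n0.+2 = i.-1 + N by lia.
    rewrite modnDr modn_small; lia.
  by apply/val_inj; rewrite /= inordK ?modN_lt // i0 add0n modn_small.
have sp1 : small p1.2 by apply: Dpow_small => j; rewrite inE.
pose S k := inord k \in Z.
have [P1 P2] := phase1w S (ltnSn N.-1) sp1.
exists (foldl step (setK (fun k => k == 0), p1.2) (W1 S N.-1)).2; split=> //.
have -> : Z = (foldl step (setK (fun k => k == 0), p1.2) (W1 S N.-1)).1.
  rewrite P1 [LHS]setK_id; apply: eq_setK => k hk.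
  have e0 : (inord 0 : IK) = ord0 by apply/val_inj; rewrite /= inordK.
  case: (posnP k) => [->|kp]; first by rewrite e0 hZ.
  rewrite /S /=; have -> : k + N.-1 + 1 - N = k by lia.
  by rewrite andbC; case: (inord k \in Z) => //=; apply/esym/idP; lia.
rewrite -surjective_pairing -hp1 -surjective_pairing /p1.
by rewrite -foldl_cat; exists (nseq N.-1 ld ++ W1 S N.-1).
Qed.

Lemma reachX0 (X0 : {set IK}) (e : IK) : e \in X0 -> exists Y, small Y /\ reach (X0, Y).
Proof.
move=> he.
have [|Y [sY rY]] := @reachZ (rotK e X0).
  by rewrite inE /= add0n modn_small // inord_val.
have [D1 D2] := Dpow (N - e) (rotK e X0) Y.
exists (foldl step (rotK e X0, Y) (nseq (N - e) ld)).2; split.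
  exact: Dpow_small.
have R := reach_fold (nseq (N - e) ld) rY.
rewrite (surjective_pairing (foldl _ _ _)) D1 rotK_add subnK ?rotKN in R => //.
exact: ltnW.
Qed.

Lemma dK_cc i : dK (dK i lc) lc = i.
Proof. by case: i => [[|[|k]] hk]; apply/val_inj; rewrite !dK_c /= ?inordK. Qed.

Lemma clean (X0 : {set IK}) (Y : {set IL}) : ord0 \notin X0 -> small Y ->
  foldl step (X0, Y) [:: lc; lc] = (X0, set0).
Proof.
move=> h0 hY.
have hs1 := @small_step X0 Y lc isT hY.
rewrite /= /step /=; congr pair.
  by apply/setP=> i; rewrite !inE dK_cc.
apply/setP=> j; rewrite in_set0 inE.
apply/negbTE; rewrite negb_or; apply/andP; split.
  apply/negP=> H; move: (hs1 _ H); rewrite dL_c; case: ifP => [_ /(congr1 val) //|/negbT h e].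
  by case/negP: h; rewrite e.
by rewrite inE dK_cc (negbTE h0).
Qed.

Lemma step_a0 (X : {set IK}) (Y : {set IL}) : ord0 \notin X ->
  step (X, Y) la = (X, [set j | dL j la \in Y]).
Proof.
move=> h0; rewrite /step /=; congr pair; apply/setP=> i; rewrite !inE ?dK_a //.
by rewrite (negbTE h0) /= orbF.
Qed.

Lemma dpowN (X : {set IK}) (Y : {set IL}) (e : IK) : e \in X ->
  foldl step (X, Y) (nseq N ld) = (X, Y :|: [set ord_max]).
Proof.
move=> he; have [D1 D2] := Dpow N X Y.
rewrite (surjective_pairing (foldl _ _ _)) D1 rotKN; congr pair.
apply/setP=> j; rewrite !inE; apply/idP/idP.
  by move/D2=> [->|[->]] //; rewrite orbT.
case/orP=> h; apply/D2; [by left|right; split=> //].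
have hN := ltn_ord e.
case: (posnP e) => [e0|ep].
  exists N.-1 => //; have -> : N.-1.+1 %% N = 0 := modnn N.
  by have <- : e = inord 0 by apply/val_inj; rewrite /= inordK.
exists e.-1; first lia.
by rewrite prednK // modn_small // inord_val.
Qed.

Lemma setL_U1 P : setL P :|: [set ord_max] = setL (fun k => P k || (k == M.-1)).
Proof. by apply/setP=> j; rewrite !inE. Qed.

Fixpoint Wy (T : nat -> bool) t : word :=
  if t is t'.+1 then Wy T t' ++ la :: (if T t' then nseq N ld else [::]) else [::].

Lemma phase3 T (X0 : {set IK}) (e : IK) t : ord0 \notin X0 -> e \in X0 -> t <= M ->
  foldl step (X0, set0) (Wy T t) = (X0, setL (fun k => (M - t <= k) && T (k + t - M))).
Proof.
move=> h0 he; elim: t => [|t IH] ht.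
  congr pair; apply/setP=> j; rewrite !inE subn0 leqNgt ltn_ord //.
rewrite /= foldl_cat IH; last by lia.
rewrite /= step_a0 // stepL_a.
have E : setL (fun k => (M - t <= k.+1 %% M) && T (k.+1 %% M + t - M))
   = setL (fun k => ((M - t.+1 <= k) && T (k + t.+1 - M) && (k != M.-1)) ).
  apply: eq_setL => k hk.
  have [->|km] := eqVneq k M.-1.
    rewrite prednK // modnn /= andbF; apply/negbTE; lia.
  rewrite modn_small; last by lia.
  have -> : (M - t <= k.+1) = (M - t.+1 <= k) by apply/idP/idP; lia.
  by rewrite andbT; have -> : k.+1 + t - M = k + t.+1 - M by lia.
case hT: (T t); rewrite E; last first.
  congr pair; apply: eq_setL => k hk.
  have [->|km] := eqVneq k M.-1; rewrite ?andbT //= andbF.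
  have -> : M.-1 + t.+1 - M = t by lia.
  by rewrite hT andbF.
rewrite (dpowN _ he) setL_U1; congr pair; apply: eq_setL => k hk.
have [->|km] := eqVneq k M.-1; rewrite ?andbT ?orbF //= andbF /=.
have -> : M.-1 + t.+1 - M = t by lia.
by rewrite hT andbT; apply/esym/idP; lia.
Qed.

Lemma dL_bb j : dL (dL j lb) lb = j.
Proof. by case: j => [[|[|k]] hk]; apply/val_inj; rewrite !dL_b /= ?inordK. Qed.

Lemma reach_mid (X0 : {set IK}) (YT : {set IL}) (e : IK) :
  e \in X0 -> ord0 \notin X0 -> reach (X0, YT).
Proof.
move=> he h0.
have [Y [sY rY]] := reachX0 he.
have R1 := reach_fold [:: lc; lc] rY.
rewrite clean // in R1.
have R2 := reach_fold (Wy (fun k => inord k \in YT) M) R1.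
rewrite (phase3 _ h0 he) // in R2.
suff -> : YT = setL (fun k => (M - M <= k) && (inord (k + M - M) \in YT)) by [].
rewrite [LHS]setL_id; apply: eq_setL => k hk.
by rewrite subnn /= addnK.
Qed.

Lemma reach_ne (XT : {set IK}) (YT : {set IL}) (e u : IK) :
  e \in XT -> u \notin XT -> (ord0 \in XT -> ord_max \in YT) -> reach (XT, YT).
Proof.
move=> he hu hc.
case h0: (ord0 \in XT); last by apply: (reach_mid _ he); rewrite h0.
have hmax := hc h0.
have hu' : (inord ((0 + u) %% N) : IK) = u by rewrite add0n modn_small // inord_val.
pose e' : IK := inord ((e + (N - u)) %% N).
have he' : e' \in rotK u XT.
  rewrite inE inordK ?modN_lt // modnDml -addnA subnK; last exact: ltnW.
  by rewrite modnDr modn_small // inord_val.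
have R := @reach_mid (rotK u XT) YT e' he'.
have [D1 D2] := Dpow (N - u) (rotK u XT) YT.
have R' := reach_fold (nseq (N - u) ld) (R _).
rewrite (surjective_pairing (foldl _ _ _)) D1 rotK_add subnK ?rotKN in R'; last exact: ltnW.
suff E : (foldl step (rotK u XT, YT) (nseq (N - u) ld)).2 = YT.
  by rewrite E in R'; apply: R'; rewrite inE hu'.
apply/setP=> j; apply/idP/idP; first by move/D2=> [//|[/eqP -> _]].
by move=> hj; apply/D2; left.
Qed.

Lemma reach_all (XT : {set IK}) (YT : {set IL}) :
  (ord0 \in XT -> ord_max \in YT) -> reach (XT, YT).
Proof.
move=> hc.
case: (set_0Vmem XT) => [->|[e he]].
  have R := @reach_mid [set ord_max] [set j | dL j lb \in YT] ord_max.
  have h0 : ord0 \notin [set ord_max : IK] by rewrite inE.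
  have R' := reach_fold [:: lb] (R (set11 _) h0).
  suff -> : (set0, YT) = foldl step ([set ord_max], [set j | dL j lb \in YT]) [:: lb] by [].
  rewrite /= /step /=; congr pair.
    by apply/setP=> i; rewrite !inE dK_b; case: ifP.
  by apply/setP=> j; rewrite !inE dL_bb /= orbF.
have [u hu|hall] := pickP (fun i => i \notin XT).
  exact: reach_ne he hu hc.
have eT : XT = setT by apply/setP=> i; rewrite inE; have := hall i => /= /negbFE.
subst XT.
have hmax := hc (in_setT _).
have R := @reach_ne (setT :\ ord_max) [set j | dL j lb \in YT] ord0 ord_max.
have h1 : ord0 \in setT :\ (ord_max : IK) by rewrite !inE.
have h2 : (ord_max : IK) \notin setT :\ ord_max by rewrite !inE eqxx.
have h3 : ord0 \in setT :\ (ord_max : IK) -> (ord_max : IL) \in [set j | dL j lb \in YT].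
  by move=> _; rewrite inE dL_b /=.
have R' := reach_fold [:: lb] (R h1 h2 h3).
suff -> : (setT, YT) = foldl step (setT :\ ord_max, [set j | dL j lb \in YT]) [:: lb] by [].
rewrite /= /step /=; congr pair.
  apply/setP=> i; rewrite !inE dK_b andbT; case: ifP => //= h.
  by apply/esym; apply/negP=> /eqP/(congr1 val) /= e'; rewrite e' eqxx in h.
apply/setP=> j; rewrite !inE dL_bb dK_b /=.
by case: (eqVneq j ord_max) => [->|]; rewrite ?hmax ?andbF ?orbF.
Qed.

Definition cons (p : St) := (ord0 \in p.1) ==> (ord_max \in p.2).
Definition good (p : St) := cons p && (p.2 != setT).
Local Notation Qst := (option {p : St | good p}).

Definition odelta (o : Qst) (t : Sigma) : Qst :=
  if o is Some p then insub (step (val p) t) else None.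
Definition ofinal (o : Qst) : bool := if o is Some p then ord0 \in (val p).2 else true.

Definition Adfa : dfa := @DFA Qst (insub init) ofinal odelta.

Lemma cons_step p t : cons (step p t).
Proof. by apply/implyP; rewrite /= !inE => ->; rewrite eqxx orbT. Qed.

Lemma cons_phi w : cons (phi w).
Proof.
elim/last_ind: w => [|w t _]; last by rewrite phi_rcons cons_step.
by rewrite /cons /phi /= inE.
Qed.

Lemma Adfa_run w : foldl odelta (insub init) w = insub (phi w).
Proof.
elim/last_ind: w => [//|w t IH].
rewrite foldl_rcons IH phi_rcons.
case: insubP => [u _ <-|] //=.
rewrite /good cons_phi /= negbK => /eqP h.
rewrite insubN //; rewrite /good negb_and; apply/orP; right.
by rewrite negbK step_full.
Qed.

Lemma Adfa_rec : recognizes Adfa Lang.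
Proof.
move=> w; rewrite Lang_phi /accepts /= Adfa_run.
case: insubP => [u _ <-|] //=.
rewrite /good cons_phi /= negbK => /eqP ->; by rewrite inE.
Qed.

Lemma card_good :
  #|[pred p : St | good p]| = 2 ^ N.-1 * (2 ^ M.-1 - 1) + 2 ^ N.-1 * (2 ^ M - 1).
Proof.
pose S1 := [set X : {set IK} | ord0 \in X].
pose S0 := [set X : {set IK} | ord0 \notin X].
pose T1 := [set Y : {set IL} | (ord_max \in Y) && (Y != setT)].
pose T0 := [set Y : {set IL} | Y != setT].
have E : [pred p : St | good p] =i setX S1 T1 :|: setX S0 T0.
  case=> X Y; rewrite !inE /good /cons /=.
  by case: (ord0 \in X); case: (ord_max \in Y); case: (Y != setT).
rewrite (eq_card E) cardsU !cardsX.
have -> : #|setX S1 T1 :&: setX S0 T0| = 0.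
  apply/eqP; rewrite cards_eq0; apply/eqP/setP=> [[X Y]]; rewrite !inE.
  by case: (ord0 \in X); rewrite ?andbF.
have cS1 : #|S1| = 2 ^ N.-1 by rewrite card_in card_ord expnS -[N.-1]/(n0.+2); lia.
have cS0 : #|S0| = 2 ^ N.-1 by rewrite card_notin card_ord.
have cT0 : #|T0| = 2 ^ M - 1.
  have := cardsD1 [set: IL] [set: {set IL}].
  rewrite cardsT card_setsT card_ord in_setT => ->.
  rewrite add1n subSS subn0; apply: eq_card => Y; rewrite !inE andbT.
  by [].
have cT1 : #|T1| = 2 ^ M.-1 - 1.
  have := cardsD1 [set: IL] [set Y : {set IL} | ord_max \in Y].
  rewrite card_in card_ord !inE => h.
  have -> : #|T1| = #|[set Y : {set IL} | ord_max \in Y] :\ [set: IL]|.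
    by apply: eq_card => Y; rewrite !inE andbC.
  move: h; rewrite expnS -[M.-1]/(m0.+2); lia.
rewrite cS1 cS0 cT0 cT1 subn0 -[M.-1]/(m0.+2) -[N.-1]/(n0.+2); lia.
Qed.

Lemma card_Q : #|{: Qst}| = 3 * 2 ^ (M + N - 2) - 2 ^ N + 1.
Proof.
rewrite card_option card_sig card_good -[N.-1]/(n0.+2) -[M.-1]/(m0.+2).
have e1 : 2 ^ (M + N - 2) = 2 ^ m0.+2 * 2 ^ n0.+2.
  by rewrite -expnD; congr (2 ^ _); lia.
rewrite e1 [2 ^ N]expnS [2 ^ M]expnS.
have ha : 0 < 2 ^ n0.+2 by rewrite expn_gt0.
have hb : 0 < 2 ^ m0.+2 by rewrite expn_gt0.
nia.
Qed.

Definition rep (o : Qst) : St := if o is Some p then val p else (set0, setT).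

Lemma rep_reach o : exists w, phi w == rep o.
Proof.
have hc : ord0 \in (rep o).1 -> ord_max \in (rep o).2.
  case: o => [p|] /=; last by rewrite inE.
  by have := valP p; rewrite /good /cons => /andP[/implyP h _].
have [w e] := reach_all hc.
by exists w; rewrite e -surjective_pairing.
Qed.

Lemma lower (A : dfa) : recognizes A Lang -> #|{: Qst}| <= #|dstate A|.
Proof.
move=> HA.
pose wd o := xchoose (rep_reach o).
have hwd o : phi (wd o) = rep o := eqP (xchooseP (rep_reach o)).
pose g o := foldl (@ddelta A) (@dinit A) (wd o).
have acc w : accepts A w = (ord0 \in (phi w).2).
  by apply/idP/idP => h; [apply/Lang_phi/HA | apply/HA/Lang_phi].
suff ginj : injective g by exact: leq_card ginj.
move=> o1 o2 e; apply/eqP; apply/negP => ne.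
have [z hz] : exists z, (ord0 \in (foldl step (rep o1) z).2) != (ord0 \in (foldl step (rep o2) z).2).
  case: o1 o2 ne {e} => [p|] [q|] //= ne.
  - apply: dist; first by case/andP: (valP p).
      by case/andP: (valP q).
    by apply/negP => /eqP/val_inj epq; apply: ne; rewrite epq.
  - by apply: dist_full => //; case/andP: (valP p).
  - have [z h] := @dist_full (val q) (set0, setT) ltac:(by case/andP: (valP q)) erefl.
    by exists z; rewrite eq_sym.
case/negP: hz; rewrite -!hwd -!phi_cat -!acc /accepts !foldl_cat.
by have : g o1 = g o2 := e; rewrite /g => ->.
Qed.

End Main.

Theorem theorem6 (m n : nat) (hm : 3 <= m) (hn : 3 <= n) :
  state_complexity
    (cat_lang (rev_lang (U_lang n ld lc lb la)) (rev_lang (U_lang m la lb lc ld)))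
    (3 * 2 ^ (m + n - 2) - 2 ^ n + 1).
Proof.
case: n hn => [|[|[|n0]]] // _; case: m hm => [|[|[|m0]]] // _.
split.
  exists (Adfa n0 m0); split; first exact: Adfa_rec.
  exact: card_Q.
move=> A HA; rewrite -card_Q; exact: lower.
Qed.
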